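(* Let $F$ be a commutative field and let $k,h,n$ be integers with $1\le k\le h\le n-1$. If $\mathrm{PG}(n,F)$ contains a linear complex of $h$-subspaces having no singular $(h-1)$-subspace, then $\mathrm{PG}(n+k-h,F)$ contains a linear complex of $k$-subspaces having no singular $(k-1)$-subspace.
   Context: A $d$-subspace is a projective subspace of dimension $d$. A linear complex of $h$-subspaces of $\mathrm{PG}(n,F)$ is the set of $h$-subspaces whose Plücker image ($F(v_0\wedge\cdots\wedge v_h)$ for a basis $v_0,\dots,v_h$ of the corresponding subspace of $F^{n+1}$) lies in a fixed hyperplane of $\mathbb P(\bigwedge^{h+1}F^{n+1})$. An $(h-1)$-subspace $U$ is singular for a linear complex $K$ of $h$-subspaces if every $h$-subspace containing $U$ belongs to $K$. *)

(* Defs.v *)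
From mathcomp Require Import all_boot all_order all_algebra.
Set Implicit Arguments. Unset Strict Implicit. Unset Printing Implicit Defensive.
Import GRing.Theory.
Local Open Scope ring_scope.

(* PG(n,F) = projective space of F^(n+1) = row vectors 'rV[F]_(n.+1).
   A d-subspace is the row space of a row-free (d+1) x (n+1) matrix
   (its rows form a basis of the (d+1)-dim vector subspace). *)

Section Plucker.
Variable F : fieldType.

Definition set_idx (N m : nat) (S : {set 'I_N.+1}) (i : 'I_m) : 'I_N.+1 :=
  nth ord0 (enum S) i.

Definition plucker (m N : nat) (B : 'M[F]_(m, N.+1)) (S : {set 'I_N.+1}) : F :=
  \det (colsub (@set_idx N m S) B).

(* A hyperplane of P(/\^(h+1) F^(n+1)) is given (in Plücker coordinates,
   indexed by the (h+1)-subsets of {0..n}) by a coefficient vector c which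
   is nonzero on some (h+1)-subset. *)
Definition hyperplane_coeffs (h n : nat) (c : {ffun {set 'I_n.+1} -> F}) : Prop :=
  exists S : {set 'I_n.+1}, #|S| = h.+1 /\ c S != 0.

Definition in_complex (h n : nat) (c : {ffun {set 'I_n.+1} -> F})
    (B : 'M[F]_(h.+1, n.+1)) : Prop :=
  \sum_(S : {set 'I_n.+1} | #|S| == h.+1) c S * plucker B S = 0.

Definition singular_subspace (h n : nat) (c : {ffun {set 'I_n.+1} -> F})
    (A : 'M[F]_(h, n.+1)) : Prop :=
  forall B : 'M[F]_(h.+1, n.+1), row_free B -> (A <= B)%MS -> in_complex c B.

Definition has_nonsingular_complex (h n : nat) : Prop :=
  exists c : {ffun {set 'I_n.+1} -> F},
    hyperplane_coeffs h c /\
    forall A : 'M[F]_(h, n.+1), row_free A -> ~ singular_subspace c A.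

End Plucker.

(* Main.v *)
Require Import Defs.
From mathcomp Require Import all_boot all_order all_algebra.
Import GRing.Theory.
Local Open Scope ring_scope.
Lemma enum_filter n (S : {set 'I_n}) : enum S = [seq x <- enum 'I_n | x \in S].
rewrite -deprecated_filter_index_enum enumT. reflexivity. Qed.
Lemma sorted_ord n : sorted (fun x y : 'I_n => (x < y)%N) (enum 'I_n).
have := iota_ltn_sorted 0 n. by rewrite -val_enum_ord sorted_map. Qed.

Definition phi (P d : nat) (S' : {set 'I_P}) : {set 'I_(P + d)} :=
  lshift d @: S' :|: @rshift P d @: [set: 'I_d].
Arguments phi {P} d S'.

Lemma mem_phi P d (S' : {set 'I_P}) x :
  (x \in phi d S') = (if split x is inl i then i \in S' else true).
Proof.
case: split_ordP => [i ->|j ->]; rewrite /phi inE.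
- rewrite mem_imset; last exact: lshift_inj.
  case: imsetP => [[y _ /eqP]|]; last by rewrite orbF.
  by rewrite eq_lrshift.
- rewrite mem_imset ?inE ?orbT //; exact: rshift_inj.
Qed.

Lemma enum_phi P d (S' : {set 'I_P}) :
  enum (phi d S') = map (lshift d) (enum S') ++ map (@rshift P d) (enum 'I_d).
Proof.
have tr : transitive (fun x y : 'I_(P + d) => (x < y)%N).
  by move=> a b c; apply: ltn_trans.
apply: (@irr_sorted_eq _ (fun x y : 'I_(P + d) => (x < y)%N)) => //.
- by move=> x; rewrite ltnn.
- by rewrite enum_filter; apply: sorted_filter => //; apply: sorted_ord.
- rewrite sorted_pairwise // pairwise_cat; apply/and3P; split.
  + apply/allrelP => x y /mapP [a _ ->] /mapP [b _ ->] /=.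
    by rewrite (leq_trans (ltn_ord a)) // leq_addr.
  + rewrite -sorted_pairwise // sorted_map.
    have := sorted_ord P; rewrite enum_filter; apply: sorted_filter.
    by move=> a b c; apply: ltn_trans.
  + rewrite -sorted_pairwise // sorted_map.
    have := sorted_ord d; apply: sub_sorted => a b /=.
    by rewrite ltn_add2l.
- move=> x; rewrite mem_enum mem_phi mem_cat.
  case: split_ordP => [i ->|j ->].
  + rewrite mem_map; last exact: lshift_inj.
    rewrite mem_enum; case: mapP => [[y _ /eqP]|]; last by rewrite orbF.
    by rewrite eq_lrshift.
  + rewrite (mem_map (@rshift_inj _ _)) mem_enum orbT //.
Qed.

Lemma set_idx_phiL p k d (S' : {set 'I_p.+1}) (j : 'I_k.+1) :
  #|S'| = k.+1 ->
  @set_idx (p + d) (k.+1 + d) (phi d S') (lshift d j) = lshift d (set_idx S' j).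
Proof.
move=> hS; rewrite /set_idx (enum_phi p.+1 d S') nth_cat size_map -cardE hS /= ltn_ord.
by rewrite (nth_map ord0) // -cardE hS.
Qed.

Lemma set_idx_phiR p k d (S' : {set 'I_p.+1}) (j : 'I_d) :
  #|S'| = k.+1 ->
  @set_idx (p + d) (k.+1 + d) (phi d S') (rshift k.+1 j) = rshift p.+1 j.
Proof.
move=> hS; rewrite /set_idx (enum_phi p.+1 d S') nth_cat size_map -cardE hS /=.
rewrite ltnNge leq_addr /= addKn (nth_map j); last by rewrite size_enum_ord.
by apply: val_inj => /=; rewrite nth_enum_ord.
Qed.

Lemma splitL m n (i : 'I_m) : split (lshift n i) = inl i.
Proof. exact: (unsplitK (inl i)). Qed.
Lemma splitR m n (i : 'I_n) : split (rshift m i) = inr i.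
Proof. exact: (unsplitK (inr i)). Qed.

Lemma plucker_phi (F : fieldType) p k d (S' : {set 'I_p.+1}) (B' : 'M[F]_(k.+1, p.+1)) :
  #|S'| = k.+1 ->
  @plucker F (k + d).+1 (p + d) (block_mx B' 0 0 (1%:M : 'M_d)) (phi d S') = plucker B' S'.
Proof.
move=> hS; rewrite /plucker.
have -> : colsub (@set_idx (p + d) (k.+1 + d) (phi d S')) (block_mx B' 0 0 (1%:M : 'M_d))
   = block_mx (colsub (@set_idx p k.+1 S') B') 0 0 (1%:M : 'M[F]_d).
  apply/matrixP => i j; rewrite mxE.
  case: (split_ordP j) => [j1 ->| j2 ->].
    rewrite set_idx_phiL //.
    by case: (split_ordP i) => [i1 ->| i2 ->];
      rewrite !mxE ?splitL ?splitR /= ?row_mxEl ?row_mxEr ?mxE.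
  rewrite set_idx_phiR //.
  by case: (split_ordP i) => [i1 ->| i2 ->];
      rewrite !mxE ?splitL ?splitR /= ?row_mxEl ?row_mxEr ?mxE.
have := det_ublock (colsub (@set_idx p k.+1 S') B') 0 (1%:M : 'M[F]_d).
by rewrite det1 mulr1.
Qed.

Lemma plucker_zero (F : fieldType) p k d (S : {set 'I_(p + d).+1}) (B' : 'M[F]_(k.+1, p.+1)) (j : 'I_d) :
  #|S| = (k + d).+1 -> @rshift p.+1 d j \notin S ->
  @plucker F (k + d).+1 (p + d) (block_mx B' 0 0 (1%:M : 'M_d)) S = 0.
Proof.
move=> hS jS; rewrite /plucker (expand_det_row _ (@rshift k.+1 d j)) big1 // => l _.
rewrite mxE.
have xS : set_idx S l \in S.
  by rewrite -mem_enum /set_idx mem_nth // -cardE hS.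
case: (@split_ordP p.+1 d (set_idx S l)) xS => [x1 e|x2 e] xS; rewrite e.
  by rewrite !mxE splitR /= row_mxEl mxE mul0r.
rewrite !mxE splitR /= row_mxEr mxE.
case: eqP => [ex|]; last by rewrite mul0r.
by move: jS; rewrite ex -e xS.
Qed.

Lemma card_phi p d (S' : {set 'I_p.+1}) : #|phi d S'| = (#|S'| + d)%N.
Proof. by rewrite cardE (enum_phi p.+1 d S') size_cat !size_map -cardE -enumT size_enum_ord. Qed.

Definition psi p d (S : {set 'I_(p + d).+1}) : {set 'I_p.+1} :=
  [set i : 'I_p.+1 | @lshift p.+1 d i \in S].

Lemma sum_phi (F : fieldType) p k d (c : {ffun {set 'I_(p + d).+1} -> F}) (B' : 'M[F]_(k.+1, p.+1)) :
  \sum_(S : {set 'I_(p + d).+1} | #|S| == (k + d).+1)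
     c S * @plucker F (k + d).+1 (p + d) (block_mx B' 0 0 (1%:M : 'M_d)) S
  = \sum_(S' : {set 'I_p.+1} | #|S'| == k.+1) c (phi d S') * plucker B' S'.
Proof.
rewrite (bigID (fun S : {set 'I_(p + d).+1} => [forall j : 'I_d, @rshift p.+1 d j \in S])) /=.
rewrite [X in _ + X]big1 ?addr0; last first.
  move=> S /andP [/eqP hS /forallPn [j jS]].
  by rewrite (@plucker_zero F p k d S B' j hS jS) mulr0.
rewrite (reindex_onto (fun S' : {set 'I_p.+1} => (phi d S' : {set 'I_(p + d).+1})) (@psi p d)) /=; last first.
  move=> S /andP [_ /forallP hR]; apply/setP => x.
  rewrite (mem_phi p.+1 d (psi p d S) x); case: (@split_ordP p.+1 d x) => [x1 ->|x2 ->].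
    by rewrite inE.
  by rewrite hR.
apply: eq_big => [S'|S' /andP [/andP [/eqP hS _] _]].
  have -> : psi p d (phi d S') = S'.
    by apply/setP => i; rewrite inE mem_phi splitL.
  have hR : [forall j : 'I_d, @rshift p.+1 d j \in phi d S'].
    by apply/forallP => j; rewrite mem_phi splitR.
  by rewrite eqxx andbT hR andbT card_phi -[(k + d).+1]addSn eqn_add2r.
congr (_ * _); apply: plucker_phi.
by move: hS; rewrite card_phi -[(k + d).+1]addSn => /addIn.
Qed.

Lemma in_complex_mul (F : fieldType) h n (c : {ffun {set 'I_n.+1} -> F})
  (T : 'M[F]_h.+1) (B : 'M[F]_(h.+1, n.+1)) :
  in_complex c B -> in_complex c (T *m B).
Proof.
rewrite /in_complex => H.
rewrite (eq_bigr (fun S => \det T * (c S * plucker B S))); last first.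
  by move=> S _; rewrite /plucker -mulmx_colsub det_mulmx mulrCA.
by rewrite -mulr_sumr H mulr0.
Qed.

Lemma plucker_not_free (F : fieldType) m n (B : 'M[F]_(m, n.+1)) S :
  ~~ row_free B -> plucker B S = 0.
Proof.
move=> nf; apply/eqP; apply: contraR nf => nz.
have u : colsub (@set_idx n m S) B \in unitmx by rewrite unitmxE unitfE.
rewrite -row_free_unit in u.
rewrite /row_free eqn_leq rank_leq_row /=.
move/eqP: u => e.
apply: (@leq_trans (\rank (colsub (@set_idx n m S) B))); first by rewrite e.
have -> : colsub (@set_idx n m S) B = B *m colsub (@set_idx n m S) 1%:M.
  by rewrite mulmx_colsub mulmx1.
exact: mxrankM_maxl.
Qed.

Lemma sub_col_r (F : fieldType) m1 m2 n (X : 'M[F]_(m1, n)) (Y : 'M[F]_(m2, n)) :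
  (Y <= col_mx X Y)%MS.
Proof.
apply/submxP; exists (row_mx 0 1%:M).
by rewrite mul_row_col mul0mx mul1mx add0r.
Qed.

Lemma sub_col_l (F : fieldType) m1 m2 n (X : 'M[F]_(m1, n)) (Y : 'M[F]_(m2, n)) :
  (X <= col_mx X Y)%MS.
Proof.
apply/submxP; exists (row_mx 1%:M 0).
by rewrite mul_row_col mul0mx mul1mx addr0.
Qed.

Lemma main_gen (F : fieldType) (k d p : nat) : (k <= p.+1)%N ->
  has_nonsingular_complex F (k + d) (p + d) -> has_nonsingular_complex F k p.
Proof.
move=> hkp [c [_ Hns]].
pose c' := [ffun S' : {set 'I_p.+1} => c (phi d S')].
have Hc' : forall B' : 'M[F]_(k.+1, p.+1),
    \sum_(S' : {set 'I_p.+1} | #|S'| == k.+1) c' S' * plucker B' S' =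
    \sum_(S : {set 'I_(p + d).+1} | #|S| == (k + d).+1)
       c S * @plucker F (k + d).+1 (p + d) (block_mx B' 0 0 (1%:M : 'M_d)) S.
  by move=> B'; rewrite sum_phi; apply: eq_bigr => S' _; rewrite ffunE.
have Hns' : forall A' : 'M[F]_(k, p.+1), row_free A' -> ~ singular_subspace c' A'.
  move=> A' rfA' sing.
  pose A : 'M[F]_(k + d, (p + d).+1) := block_mx A' 0 0 (1%:M : 'M_d).
  have rfA : row_free A.
    apply/eqP; apply: etrans (rank_diag_block_mx A' (1%:M : 'M[F]_d)) _.
    by rewrite mxrank1 (eqP rfA').
  apply: (Hns A rfA).
  move=> B rfB sAB.
  have [i niA] : exists i, ~~ (row i B <= A)%MS.
    apply/row_subPn; apply: contraL rfB => sBA.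
    rewrite /row_free neq_ltn; apply/orP; left.
    by apply: (leq_ltn_trans (mxrankS sBA)); rewrite ltnS rank_leq_row.
  pose v : 'rV[F]_(p.+1 + d) := row i B.
  pose B' : 'M[F]_(k.+1, p.+1) := col_mx (lsubmx v) A'.
  pose E := block_mx B' 0 0 (1%:M : 'M[F]_d).
  have sub_gen : forall r (X : 'M[F]_(r, p.+1)) (Z : 'M[F]_(r, d)),
      (X <= B')%MS -> (row_mx X Z <= E)%MS.
    move=> r X Z /submxP [D ->]; apply/submxP; exists (row_mx D Z).
    by rewrite mul_row_block !mulmx0 mulmx1 addr0 add0r.
  have sAE : (A <= E)%MS.
    rewrite /A /block_mx col_mx_sub; apply/andP; split; apply: sub_gen.
      by have := @sub_col_r F _ _ _ (lsubmx v) A'.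
    exact: sub0mx.
  have svE : (v <= E)%MS.
    rewrite -(hsubmxK v); apply: sub_gen.
    by have := @sub_col_l F _ _ _ (lsubmx v) A'.
  have sBE : (B <= E)%MS.
    have sAvB : (A + v <= B)%MS by rewrite addsmx_sub sAB row_sub.
    have rk : (\rank B <= \rank (A + v)%MS)%N.
      apply: leq_trans (rank_leq_row B) _.
      have ltA : (A < A + v)%MS.
        by rewrite ltmxE addsmxSl /= addsmx_sub submx_refl.
      move: (rank_ltmx ltA); move/eqP: rfA => -> //.
    apply: submx_trans (_ : (A + v <= E)%MS); last by rewrite addsmx_sub sAE svE.
    by rewrite -(mxrank_leqif_sup sAvB).2 eqn_leq rk mxrankS.
  have inE' : in_complex c E.
    rewrite /in_complex -Hc'.
    case rf: (row_free B').
      apply: sing => //; by have := @sub_col_r F _ _ _ (lsubmx v) A'.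
    by apply: big1 => S _; rewrite plucker_not_free ?rf // mulr0.
  rewrite -(mulmxKpV sBE); exact: in_complex_mul.
exists c'; split; last exact: Hns'.
have : ~ singular_subspace c' (pid_mx k : 'M[F]_(k, p.+1)).
  by apply: Hns'; rewrite /row_free rank_pid_mx.
case: (boolP [exists S : {set 'I_p.+1}, (#|S| == k.+1) && (c' S != 0)]).
  by case/existsP => S /andP [/eqP ? ?] _; exists S.
move=> /existsPn H0 []; move=> B _ _; apply: big1 => S hS.
by have := H0 S; rewrite hS /= negbK => /eqP ->; rewrite mul0r.
Qed.

From mathcomp Require Import zify.
Local Close Scope ring_scope.

Theorem proposition6p1 (F : fieldType) (k h n : nat) :
  (1 <= k)%N -> (k <= h)%N -> (h <= n - 1)%N ->
  has_nonsingular_complex F h n ->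
  has_nonsingular_complex F k (n + k - h).
Proof.
move=> h1 hkh hhn H.
apply: (@main_gen F k (h - k) (n + k - h)); first by lia.
have e1 : h = (k + (h - k))%N by lia.
have e2 : n = (n + k - h + (h - k))%N by lia.
by rewrite -e1 -e2.
Qed.
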